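(* Let $\rho>1$. There exists $C=C(\rho)$ such that for all $\sigma_0,\sigma_1,\sigma_2\in\mathbb{R}$, \[ \int_{-\infty}^{\infty}\frac{dx}{\langle x^3+\sigma_2x^2+\sigma_1x+\sigma_0\rangle^{\rho}}\le C\langle3\sigma_1-\sigma_2^2\rangle^{-\frac14}. \]
   Context: $\langle x\rangle=1+|x|$. *)

(* Defs.v *)
From HB Require Import structures.
From mathcomp Require Import all_boot all_order all_algebra.
From mathcomp Require Import all_classical all_reals all_analysis.
Set Implicit Arguments. Unset Strict Implicit. Unset Printing Implicit Defensive.
Import Order.TTheory GRing.Theory Num.Theory.
Local Open Scope ring_scope.

Definition jbr {R : realType} (x : R) : R := 1 + `|x|.

(* Main.v *)
Require Import Defs.
From HB Require Import structures.
From mathcomp Require Import all_boot all_order all_algebra.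
From mathcomp Require Import all_classical all_reals all_analysis.
From mathcomp Require Import ring lra measurable_realfun.
Import Order.TTheory GRing.Theory Num.Theory.
Local Open Scope ring_scope.

Module Aux.
Set Implicit Arguments. Unset Strict Implicit.

Section S.
Variable R : realType.
Notation mu := (@lebesgue_measure R).
Implicit Types u v a k H d Q c : R.

Definition Qf u v a := u ^+ 2 + u * v + v ^+ 2 + a.

Lemma L1 u v a : 0 <= a -> 0 <= u * v -> (u - v) ^+ 2 <= Qf u v a.
Proof. rewrite /Qf => ha huv; nra. Qed.

Lemma L2 u v a : 0 <= a -> a <= Qf u v a.
Proof. rewrite /Qf => ha; nra. Qed.

Lemma L3 u v k : 0 <= k -> k <= u -> k <= v ->
  (u - v) ^+ 2 <= Qf u v (- 3 * k ^+ 2) /\ 3 * k * `|u - v| <= Qf u v (- 3 * k ^+ 2).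
Proof.
rewrite /Qf => hk hu hv; split; first nra.
have [h|h] := lerP v u.
  nra.
nra.
Qed.

Lemma L3' u v k : 0 <= k -> u <= - k -> v <= - k ->
  (u - v) ^+ 2 <= Qf u v (- 3 * k ^+ 2) /\ 3 * k * `|u - v| <= Qf u v (- 3 * k ^+ 2).
Proof.
move=> hk hu hv; have := @L3 (- u) (- v) k hk.
rewrite /Qf; move=> /(_ ltac:(lra) ltac:(lra)) [h1 h2].
have e : `|- u - - v| = `|u - v| by rewrite -normrN; congr `|_|; ring.
rewrite e in h2; split; nra.
Qed.

Lemma L4 u v k : 0 <= k -> 0 <= u <= k -> 0 <= v <= k ->
  k * `|u - v| <= - Qf u v (- 3 * k ^+ 2).
Proof.
rewrite /Qf => hk /andP[hu1 hu2] /andP[hv1 hv2].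
have [h|h] := lerP v u.
  nra.
nra.
Qed.

Lemma L4' u v k : 0 <= k -> - k <= u <= 0 -> - k <= v <= 0 ->
  k * `|u - v| <= - Qf u v (- 3 * k ^+ 2).
Proof.
move=> hk /andP[hu1 hu2] /andP[hv1 hv2].
have := @L4 (- u) (- v) k hk; rewrite /Qf.
have e : `|- u - - v| = `|u - v| by rewrite -normrN; congr `|_|; ring.
rewrite e => /(_ ltac:(apply/andP; lra) ltac:(apply/andP; lra)); nra.
Qed.

Lemma C1 d Q H : 1 <= H -> `|d| * `|Q| < 2 * H -> d ^+ 2 <= Q -> `|d| <= 2 * H.
Proof.
move=> hH h hQ.
have hd : d ^+ 2 = `|d| ^+ 2 by rewrite real_normK ?num_real.
have Q0 : `|Q| = Q by rewrite ger0_norm //; nra.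
rewrite Q0 in h; have n0 : 0 <= `|d| by [].
have [h1|h1] := lerP `|d| 1; first lra.
nra.
Qed.

Lemma C2 d Q H c : 0 < c -> `|d| * `|Q| < 2 * H -> c * `|d| <= `|Q| -> c * d ^+ 2 <= 2 * H.
Proof.
move=> hc h hQ.
have hd : d ^+ 2 = `|d| ^+ 2 by rewrite real_normK ?num_real.
have n0 : 0 <= `|d| by [].
nra.
Qed.

Lemma C3 d Q H a : 0 < a -> `|d| * `|Q| < 2 * H -> a <= Q -> `|d| <= 2 * H / a.
Proof.
move=> ha h hQ.
rewrite ler_pdivlMr //.
have Q0 : `|Q| = Q by rewrite ger0_norm //; nra.
rewrite Q0 in h; have n0 : 0 <= `|d| by [].
nra.
Qed.
Local Open Scope classical_set_scope.

Lemma diam_meas (S : set R) (D : R) : measurable S -> 0 <= D ->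
  (forall x y, S x -> S y -> `|x - y| <= D) -> (mu S <= (2 * D)%:E)%E.
Proof.
move=> mS D0 HS.
have [[x Sx]|nS] := pselect (exists x, S x); last first.
  have -> : S = set0 by apply/seteqP; split => y // Sy; apply: nS; exists y.
  by rewrite measure0 lee_fin mulr_ge0.
have sub : S `<=` `[x - D, x + D]%classic.
  move=> y Sy /=; rewrite in_itv /=.
  have := HS x y Sx Sy; rewrite ler_norml => /andP[h1 h2].
  apply/andP; split; lra.
have mI : measurable `[x - D, x + D]%classic by exact: measurable_itv.
have h := le_measure mu (mem_set mS) (mem_set mI) sub.
apply: (le_trans h).
rewrite /= lebesgue_measure_itv /= lte_fin.
case: ifPn => _; last by rewrite lee_fin mulr_ge0.
by rewrite -EFinD lee_fin; lra.
Qed.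

Lemma split_meas (S A : set R) : measurable S -> measurable A ->
  (mu S <= mu (S `&` A) + mu (S `&` ~` A))%E.
Proof.
move=> mS mA.
rewrite -{1}(setIT S) -(setUv A) setIUr.
apply: measureU2; [exact: measurableI | apply: measurableI => //; exact: measurableC].
Qed.
End S.

Section S3.
Variable R : realType.
Notation mu := (@lebesgue_measure R).

Definition cub (s0 s1 s2 x : R) := x ^+ 3 + s2 * x ^+ 2 + s1 * x + s0.

Lemma cub_diff s0 s1 s2 x y : cub s0 s1 s2 x - cub s0 s1 s2 y =
  (x - y) * Qf (x + s2 / 3) (y + s2 / 3) (s1 - s2 ^+ 2 / 3).
Proof. by rewrite /cub /Qf; field. Qed.

Lemma pairQ s0 s1 s2 H x y : `|cub s0 s1 s2 x| < H -> `|cub s0 s1 s2 y| < H ->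
  `|x - y| * `|Qf (x + s2 / 3) (y + s2 / 3) (s1 - s2 ^+ 2 / 3)| < 2 * H.
Proof.
move=> hx hy; rewrite -normrM -(cub_diff s0).
apply: (le_lt_trans (ler_normB _ _)); lra.
Qed.

Lemma mcub s0 s1 s2 : measurable_fun setT (cub s0 s1 s2).
Proof.
rewrite /cub.
apply: measurable_funD => //.
apply: measurable_funD => //.
apply: measurable_funD => //.
all: try (apply: measurable_funM => //).
all: try (apply: measurable_funX => //).

Qed.

Local Open Scope classical_set_scope.

Lemma mE s0 s1 s2 H : measurable [set x | `|cub s0 s1 s2 x| < H].
Proof.
have mf : measurable_fun setT (Num.norm \o cub s0 s1 s2).
  by apply: measurableT_comp => //; exact: mcub.
rewrite (_ : [set x | _] = setT `&` ((Num.norm \o cub s0 s1 s2) @^-1` `]-oo, H[)).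
  by apply: mf => //; exact: measurable_itv.
apply/seteqP; split => x /=; rewrite in_itv /=; by [move=> ->| case].
Qed.

Lemma memc (c x : R) : `[c, +oo[%classic x <-> c <= x.
Proof. by rewrite /= in_itv /= andbT. Qed.


Lemma memc' (c x : R) : ~ `[c, +oo[%classic x -> x < c.
Proof. by move/memc; rewrite real_leNgt ?num_real // => /negP; rewrite negbK. Qed.

Lemma split_le (S A : set R) b1 b2 : measurable S -> measurable A ->
  (mu (S `&` A) <= b1%:E)%E -> (mu (S `&` ~` A) <= b2%:E)%E -> (mu S <= (b1 + b2)%:E)%E.
Proof.
move=> mS mA h1 h2; apply: (le_trans (split_meas mS mA)).
by rewrite EFinD; apply: leeD.
Qed.

Lemma z_facts (A : R) : let z := (1 + `|A|) `^ (4^-1) in 0 < z /\ z ^+ 4 = 1 + `|A|.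
Proof.
move=> z; have h0 : 0 < 1 + `|A| by have := normr_ge0 A; lra.
split; first exact: powR_gt0.
rewrite /z -powR_mulrn ?powR_ge0 // -powRrM mulVf ?powRr1 //; lra.
Qed.


Lemma sublevel s0 s1 s2 (H : R) : 1 <= H ->
  (mu [set x | (`|cub s0 s1 s2 x| < H)%R] <=
    (24 * H / ((1 + `|3 * s1 - s2 ^+ 2|) `^ (4^-1)))%:E)%E.
Proof.
move=> hH.
set E := [set x | _].
have mE' : measurable E by exact: mE.
set a := s1 - s2 ^+ 2 / 3.
have hA : 3 * s1 - s2 ^+ 2 = 3 * a by rewrite /a; field.
rewrite hA.
have [z0 z4] := z_facts (3 * a).
set z := (1 + `|3 * a|) `^ 4^-1 in z0 z4 *.
have z4' : z ^+ 4 = (z ^+ 2) ^+ 2 by rewrite -exprM.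
have z2ge : 0 <= z ^+ 2 by exact: sqr_ge0.
have pr : forall x y, E x -> E y ->
    `|x - y| * `|Qf (x + s2 / 3) (y + s2 / 3) a| < 2 * H.
  by move=> x y; exact: pairQ.
have ed : forall x y, (x + s2 / 3) - (y + s2 / 3) = x - y by move=> x y; ring.
have mI : forall c : R, measurable `[c, +oo[%classic by move=> c; exact: measurable_itv.
have [ha|ha] := leP 0 a.
  have nA : `|3 * a| = 3 * a by rewrite ger0_norm //; lra.
  rewrite nA in z4.
  have [ha3|ha3] := leP a 3.
    apply: le_trans; first apply: (@split_le _ `[- (s2 / 3), +oo[%classic (2 * (2 * H)) (2 * (2 * H)) mE' (mI _)).
    - apply: diam_meas; first exact: measurableI.
        lra.
      move=> x y [Ex /memc hx] [Ey /memc hy].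
      apply: (C1 hH (pr x y Ex Ey)); rewrite -(ed x y); apply: L1 => //; nra.
    - apply: diam_meas; first by apply: measurableI => //; exact: measurableC.
        lra.
      move=> x y [Ex /memc' hx] [Ey /memc' hy].
      apply: (C1 hH (pr x y Ex Ey)); rewrite -(ed x y); apply: L1 => //; nra.
    rewrite lee_fin ler_pdivlMr //.
    have hz2 : z ^+ 2 <= 4 by nra.
    have : z <= 3 by nra.
    nra.
  apply: le_trans; first apply: (@diam_meas _ E (2 * H / a) mE').
  - apply: divr_ge0; lra.
  - move=> x y Ex Ey.
    apply: (C3 _ (pr x y Ex Ey)); first lra.
    apply: L2; lra.
  rewrite lee_fin ler_pdivlMr //.
  have z21 : 1 <= z ^+ 2 by nra.
  have z1 : 1 <= z by nra.
  have z12 : z <= z ^+ 2 by nra.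
  have z44 : z <= z ^+ 4 by nra.
  have ht : 2 * H / a * a = 2 * H by rewrite divfK //; apply/eqP; lra.
  have t0 : 0 <= 2 * H / a by apply: divr_ge0; lra.
  nra.
set k := Num.sqrt (- a / 3).
have k0 : 0 <= k by exact: sqrtr_ge0.
have hk2 : k ^+ 2 = - a / 3 by rewrite sqr_sqrtr //; lra.
have ea : a = - 3 * k ^+ 2 by rewrite hk2; field.
have nA : `|3 * a| = 9 * k ^+ 2 by rewrite ltr0_norm; lra.
rewrite nA in z4.
rewrite ea in pr.
have nQ : forall Q : R, Q <= `|Q| /\ - Q <= `|Q|.
  by move=> Q; split; [exact: ler_norm | rewrite -normrN; exact: ler_norm].
have [hk1|hk1] := leP k 1.
  apply: le_trans; first apply: (@split_le _ `[k - s2 / 3, +oo[%classic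
     (2 * (2 * H)) (2 * (2 * k) + 2 * (2 * H)) mE' (mI _)).
  - apply: diam_meas; first exact: measurableI.
      lra.
    move=> x y [Ex /memc hx] [Ey /memc hy].
    apply: (C1 hH (pr x y Ex Ey)); rewrite -(ed x y).
    have [h1 _] := @L3 _ (x + s2 / 3) (y + s2 / 3) k k0 ltac:(lra) ltac:(lra).
    exact: h1.
  - apply: (@split_le _ `[- k - s2 / 3, +oo[%classic (2 * (2 * k)) (2 * (2 * H))).
    + by apply: measurableI => //; exact: measurableC.
    + exact: mI.
    + apply: diam_meas.
      * by apply: measurableI; [apply: measurableI => //; exact: measurableC|exact: mI].
      * lra.
      move=> x y [[Ex /memc' hx1] /memc hx2] [[Ey /memc' hy1] /memc hy2].
      rewrite ler_norml; apply/andP; split; lra.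
    + apply: diam_meas.
      * apply: measurableI; [apply: measurableI => //; exact: measurableC|].
        exact: measurableC.
      * lra.
      move=> x y [[Ex /memc' hx1] /memc' hx2] [[Ey /memc' hy1] /memc' hy2].
      apply: (C1 hH (pr x y Ex Ey)); rewrite -(ed x y).
      have [h1 _] := @L3' _ (x + s2 / 3) (y + s2 / 3) k k0 ltac:(lra) ltac:(lra).
      exact: h1.
  rewrite lee_fin ler_pdivlMr //.
  have hz2 : z ^+ 2 <= 4 by nra.
  have : z <= 2 by nra.
  nra.
set s := Num.sqrt (2 * H / k).
have s0' : 0 <= s by exact: sqrtr_ge0.
have hs2 : s ^+ 2 * k = 2 * H by rewrite sqr_sqrtr ?divfK //; [apply/eqP; lra | apply: divr_ge0; lra].
have ks : forall d : R, k * d ^+ 2 <= 2 * H -> `|d| <= s.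
  move=> d hd; rewrite -sqrtr_sqr; apply: ler_wsqrtr.
  by rewrite ler_pdivlMr; [lra | lra].
have P : forall S : set R, measurable S ->
    (forall x y, S x -> S y -> k * (x - y) ^+ 2 <= 2 * H) -> (mu S <= (2 * s)%:E)%E.
  move=> S mS hS; apply: diam_meas => // x y Sx Sy; apply: ks; exact: hS.
apply: le_trans; first apply: (@split_le _ `[- (s2 / 3), +oo[%classic
   (2 * s + 2 * s) (2 * s + 2 * s) mE' (mI _)).
- apply: (@split_le _ `[k - s2 / 3, +oo[%classic (2 * s) (2 * s)).
  + exact: measurableI.
  + exact: mI.
  + apply: P; first by apply: measurableI; [exact: measurableI|exact: mI].
    move=> x y [[Ex /memc hx1] /memc hx2] [[Ey /memc hy1] /memc hy2].
    have [_ h2] := @L3 _ (x + s2 / 3) (y + s2 / 3) k k0 ltac:(lra) ltac:(lra).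
    rewrite ed in h2.
    have [nq _] := nQ (Qf (x + s2 / 3) (y + s2 / 3) (-3 * k ^+ 2)).
    have := C2 (_ : 0 < 3 * k) (pr x y Ex Ey) (le_trans h2 nq).
    have := sqr_ge0 (x - y); move=> q0 h; have := h ltac:(lra); nra.
  + apply: P; first by apply: measurableI; [exact: measurableI|exact: measurableC].
    move=> x y [[Ex /memc hx1] /memc' hx2] [[Ey /memc hy1] /memc' hy2].
    have h2 := @L4 _ (x + s2 / 3) (y + s2 / 3) k k0 ltac:(apply/andP; lra) ltac:(apply/andP; lra).
    rewrite ed in h2.
    have [_ nq] := nQ (Qf (x + s2 / 3) (y + s2 / 3) (-3 * k ^+ 2)).
    apply: (C2 _ (pr x y Ex Ey) (le_trans h2 nq)); lra.
- apply: (@split_le _ `[- k - s2 / 3, +oo[%classic (2 * s) (2 * s)).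
  + by apply: measurableI => //; exact: measurableC.
  + exact: mI.
  + apply: P; first by apply: measurableI; [apply: measurableI => //; exact: measurableC|exact: mI].
    move=> x y [[Ex /memc' hx1] /memc hx2] [[Ey /memc' hy1] /memc hy2].
    have h2 := @L4' _ (x + s2 / 3) (y + s2 / 3) k k0 ltac:(apply/andP; lra) ltac:(apply/andP; lra).
    rewrite ed in h2.
    have [_ nq] := nQ (Qf (x + s2 / 3) (y + s2 / 3) (-3 * k ^+ 2)).
    apply: (C2 _ (pr x y Ex Ey) (le_trans h2 nq)); lra.
  + apply: P; first by apply: measurableI; [apply: measurableI => //; exact: measurableC|exact: measurableC].
    move=> x y [[Ex /memc' hx1] /memc' hx2] [[Ey /memc' hy1] /memc' hy2].
    have [_ h2] := @L3' _ (x + s2 / 3) (y + s2 / 3) k k0 ltac:(lra) ltac:(lra).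
    rewrite ed in h2.
    have [nq _] := nQ (Qf (x + s2 / 3) (y + s2 / 3) (-3 * k ^+ 2)).
    have := C2 (_ : 0 < 3 * k) (pr x y Ex Ey) (le_trans h2 nq).
    have := sqr_ge0 (x - y); move=> q0 h; have := h ltac:(lra); nra.
rewrite lee_fin ler_pdivlMr //.
have hz2 : z ^+ 2 <= 4 * k by nra.
have hsz : s ^+ 2 * z ^+ 2 <= 8 * H.
  have := ler_wpM2l (sqr_ge0 s) hz2; nra.
have sz0 : 0 <= s * z by apply: mulr_ge0; lra.
have : s * z <= 3 * H by nra.
nra.
Qed.
End S3.

Lemma two_gt {R : realType} (rho : R) : 1 < rho -> 2 < (2 : R) `^ rho.
Proof.
move=> hr; rewrite /powR (_ : ((2:R) == 0) = false); last by rewrite pnatr_eq0.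
rewrite -[X in X < _](@lnK _ 2) ?posrE // ltr_expR.
have := @ln_gt0 R 2 ltac:(lra); nra.
Qed.

Lemma geom_bound (R : realType) (M q : R) : 0 <= M -> 0 < q -> q < 1 ->
  (\sum_(0 <= n <oo) (M * q ^+ n)%:E <= (M / (1 - q))%:E)%E.
Proof.
move=> hM hq0 hq1.
apply: lime_le; first by apply: is_cvg_nneseries => n _ _; rewrite lee_fin mulr_ge0 // exprn_ge0 // ltW.
apply: nearW => n; rewrite sumEFin lee_fin.
have := @geometric_le_lim R n M q hM hq0 ltac:(rewrite ger0_norm; lra).
by rewrite /series /=.
Qed.

Local Open Scope classical_set_scope.

Lemma powR_pow2 (R : realType) (rho : R) (N : nat) :
  ((2 : R) ^+ N) `^ rho = ((2 : R) `^ rho) ^+ N.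
Proof.
rewrite -powR_mulrn // powRAC powR_mulrn // powR_ge0.
Qed.

Lemma pointwise (R : realType) (rho : R) s0 s1 s2 x : 1 < rho ->
  ((((jbr (cub s0 s1 s2 x)) `^ rho)^-1)%:E <=
   \sum_(0 <= n <oo) (((2 : R) `^ rho * ((2 : R) `^ rho)^-1 ^+ n) *
       \1_([set y | (`|cub s0 s1 s2 y| < 2 ^+ n)%R]) x)%:E)%E.
Proof.
move=> hr.
have two2 := @two_gt _ rho hr.
set two := (2 : R) `^ rho in two2 *.
set t := jbr (cub s0 s1 s2 x).
have ht1 : 1 <= t by rewrite /t /jbr; have := normr_ge0 (cub s0 s1 s2 x); lra.
have ex : exists n, t < 2 ^+ n.
  exists (Num.trunc t).+1; apply: (lt_le_trans (truncnS_gt t)).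
  by rewrite -natrX ler_nat; apply: ltnW; exact: ltn_expl.
case: (ex_minnP ex) => N hN hmin.
have N0 : (0 < N)%N.
  case: N hN hmin => // hN _; move: hN; rewrite expr0; lra.
have hN1 : 2 ^+ N.-1 <= t.
  rewrite leNgt; apply/negP => h; have := hmin _ h.
  by case: N N0 {hN hmin h} => //= n _; rewrite ltnn.
have tpos : 0 < t `^ rho by apply: powR_gt0; lra.
have tw0 : 0 < two by lra.
have key : two ^+ N <= two * t `^ rho.
  rewrite /two -powR_pow2 -powRM //; last lra.
  apply: ge0_ler_powR; [lra| |  |].
  - by rewrite nnegrE exprn_ge0.
  - by rewrite nnegrE; apply: mulr_ge0; lra.
  by rewrite -(prednK N0) exprS; lra.
have bnd : (t `^ rho)^-1 <= two * two^-1 ^+ N.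
  have twN : 0 < two ^+ N by exact: exprn_gt0.
  rewrite exprVn -invf_div lef_pV2 ?posrE //; last by apply: divr_gt0.
  by rewrite ler_pdivrMr //; rewrite mulrC.
have tge : forall n, 0 <= two * two^-1 ^+ n.
  by move=> n; apply: mulr_ge0; [lra | apply: exprn_ge0; rewrite invr_ge0; lra].
apply: le_trans; last apply: (@nneseries_lim_ge _ _ _ 0 N.+1).
  rewrite big_nat_recr //=; apply: le_trans; last apply: leeDr.
    rewrite indicE mem_set ?mulr1 ?lee_fin //.
    by rewrite /=; move: hN; rewrite /t /jbr; lra.
  apply: sume_ge0 => n _; rewrite lee_fin; apply: mulr_ge0; first exact: tge.
  by rewrite indicE.
move=> n _ _; rewrite lee_fin; apply: mulr_ge0; first exact: tge.
by rewrite indicE.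
Qed.


End Aux.
Import Aux.
Unset Implicit Arguments. Set Strict Implicit.

Theorem lemma4p4 (R : realType) (rho : R) (hrho : 1 < rho) :
  exists C : R, forall s0 s1 s2 : R,
    (\int[@lebesgue_measure R]_(x in [set: R])
        ((jbr (x ^+ 3 + s2 * x ^+ 2 + s1 * x + s0)) `^ rho)^-1 %:E
     <= (C * (jbr (3 * s1 - s2 ^+ 2)) `^ (- (4 : R)^-1))%:E)%E.
Proof.
have two2 := @two_gt _ rho hrho.
set two := (2:R) `^ rho in two2 *.
set q := 2 * two^-1.
have tw0 : 0 < two by lra.
have q0 : 0 < q by rewrite /q; apply: mulr_gt0; [lra | rewrite invr_gt0].
have q1 : q < 1 by rewrite /q ltr_pdivrMr // mul1r.
exists (24 * two / (1 - q)).
move=> s0 s1 s2.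
have [z0 z4] := z_facts (3 * s1 - s2 ^+ 2).
set z := (1 + `|3 * s1 - s2 ^+ 2|) `^ 4^-1 in z0 z4 *.
have eR : jbr (3 * s1 - s2 ^+ 2) `^ (- 4^-1) = z^-1 by rewrite powRN.
rewrite eR.
set E := fun n : nat => [set y | (`|cub s0 s1 s2 y| < 2 ^+ n)%R]%classic.
have tge : forall n, 0 <= two * two^-1 ^+ n.
  by move=> n; apply: mulr_ge0; [lra | apply: exprn_ge0; rewrite invr_ge0; lra].
set h := fun n x => ((two * two^-1 ^+ n) * \1_(E n) x)%:E.
have mh : forall n, measurable_fun setT (h n).
  move=> n; apply/measurable_EFinP; apply: measurable_funM => //.
  exact: measurable_indic (mE _ _ _ _).
have h0 : forall n x, (0 <= h n x)%E.
  by move=> n x; rewrite lee_fin; apply: mulr_ge0 => //; rewrite indicE.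
apply: (@le_trans _ _ (\int[lebesgue_measure]_(x in setT) \sum_(0 <= n <oo) h n x)%E).
  apply: ge0_le_integral => //.
  - by move=> x _; rewrite lee_fin invr_ge0 powR_ge0.
  - have -> : (fun x => (((jbr (x ^+ 3 + s2 * x ^+ 2 + s1 * x + s0)) `^ rho)^-1)%:E)
       = (EFin \o (fun x => (jbr (cub s0 s1 s2 x)) `^ (- rho))).
      by apply: funext => x; rewrite /= powRN.
    apply/measurable_EFinP; apply: (measurableT_comp (f := fun t : R => t `^ (- rho)) (g := fun x => jbr (cub s0 s1 s2 x))); first exact: measurable_powR.
    rewrite /jbr; apply: measurable_funD => //; apply: measurableT_comp => //; exact: mcub.
  - exact: (@ge0_emeasurable_sum _ _ _ setT h xpredT).
  - move=> x _; exact: pointwise.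
rewrite integral_nneseries //.

apply: le_trans; first apply: (@lee_nneseries _ _ (fun n => ((24 * two / z) * q ^+ n)%:E)).
- move=> n _ _; apply: integral_ge0 => x _; exact: h0.
- move=> n _; rewrite /h.
  under eq_integral do rewrite EFinM.
  rewrite ge0_integralZl_EFin //; try (by move=> x _; rewrite lee_fin indicE);
    try (apply/measurable_EFinP; exact: measurable_indic (mE _ _ _ _)).
  rewrite integral_indic // ?setIT; last exact: mE.
  have sb := @sublevel R s0 s1 s2 (2 ^+ n) (@exprn_ege1 R n 2 ltac:(lra)).
  have tn : (0 <= (two * two^-1 ^+ n)%:E)%E by rewrite lee_fin; exact: tge.
  apply: le_trans; first exact: (lee_wpmul2l tn sb).
  rewrite -EFinM lee_fin; rewrite le_eqVlt; apply/orP; left; apply/eqP; rewrite /q exprMn.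
  rewrite -/z; field.
  by rewrite gt_eqF.
apply: le_trans; first apply: geom_bound => //.
  by apply: divr_ge0; [lra|exact: ltW].
rewrite lee_fin; rewrite le_eqVlt; apply/orP; left; apply/eqP; field.
by apply/andP; split; [rewrite gt_eqF | apply/eqP; lra].
Qed.
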